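(* Let $\mathcal D=(A,D)$ be a dependence alphabet and suppose there are distinct letters $a,b\in A$ with $(a,b)\in D$. Let $\mathcal R\subseteq\mathbb M(\mathcal D)^2$ be a rational trace relation. Then there exist lc-rational trace relations $\mathcal R_1,\mathcal R_2$ such that $\mathcal R=\mathcal R_1^{-1}\circ\mathcal R_2$.
   Context: A dependence alphabet is $\mathcal D=(A,D)$, $A$ finite, $D\subseteq A\times A$ reflexive and symmetric; $x,y$ independent if $(x,y)\notin D$. $\sim$ is the least congruence on $A^*$ with $xy\sim yx$ for independent $x,y$; $\mathbb M(\mathcal D)=A^*/{\sim}$, $[w]$ the class of $w$, $[R]=\{([u],[v])\mid(u,v)\in R\}$. A trace relation is rational if it equals $[R]$ for a rational word relation $R$ (one accepted by a finite transducer). A word relation $R$ is left-closed if $u\sim u'$, $(u',v')\in R$ imply some $v$ with $(u,v)\in R$, $v\sim v'$; a trace relation is lc-rational if it equals $[R]$ for a left-closed rational word relation $R$. $\mathcal R^{-1}=\{(y,x)\mid(x,y)\in\mathcal R\}$ and $\mathcal R_1\circ\mathcal R_2=\{(x,z)\mid\exists y:(x,y)\in\mathcal R_1,(y,z)\in\mathcal R_2\}$. *)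

(* Defs.v *)
From mathcomp Require Import all_boot.
Set Implicit Arguments. Unset Strict Implicit. Unset Printing Implicit Defensive.

Section Traces.
Variables (A : finType) (D : rel A).

(* x, y independent iff ~~ D x y.  trace_eq is the least congruence on A^*
   containing xy ~ yx for independent x, y: the equivalence closure of
   swapping two adjacent independent letters inside an arbitrary context. *)
Inductive trace_eq : seq A -> seq A -> Prop :=
| te_refl u : trace_eq u u
| te_swap u v x y : ~~ D x y -> trace_eq (u ++ x :: y :: v) (u ++ y :: x :: v)
| te_sym u v : trace_eq u v -> trace_eq v u
| te_trans u v w : trace_eq u v -> trace_eq v w -> trace_eq u w.

Definition trace := {P : seq A -> Prop | exists w, P = trace_eq w}.
Definition cls (w : seq A) : trace := exist _ (trace_eq w) (ex_intro _ w erefl).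

Definition word_rel := seq A -> seq A -> Prop.
Definition trace_rel := trace -> trace -> Prop.

Definition lift (R : word_rel) : trace_rel :=
  fun x y => exists u v, R u v /\ x = cls u /\ y = cls v.

Record transducer := Transducer {
  tr_state : finType;
  tr_init : pred tr_state;
  tr_final : pred tr_state;
  tr_trans : seq (tr_state * seq A * seq A * tr_state) }.

Inductive tr_run (T : transducer) : tr_state T -> tr_state T -> seq A -> seq A -> Prop :=
| run_nil q : tr_run q q [::] [::]
| run_cons q q' r u1 v1 u v :
    (q, u1, v1, q') \in tr_trans T -> tr_run q' r u v ->
    tr_run q r (u1 ++ u) (v1 ++ v).

Definition tr_accepts (T : transducer) : word_rel :=
  fun u v => exists q r, [/\ @tr_init T q, @tr_final T r & @tr_run T q r u v].

Definition rational_wrel (R : word_rel) : Prop :=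
  exists T : transducer, forall u v, R u v <-> tr_accepts T u v.

Definition left_closed (R : word_rel) : Prop :=
  forall u u' v', trace_eq u u' -> R u' v' -> exists v, R u v /\ trace_eq v v'.

Definition same_trel (R S : trace_rel) : Prop := forall x y, R x y <-> S x y.

Definition rational_trel (R : trace_rel) : Prop :=
  exists W, rational_wrel W /\ same_trel R (lift W).

Definition lc_rational_trel (R : trace_rel) : Prop :=
  exists W, rational_wrel W /\ left_closed W /\ same_trel R (lift W).

Definition trel_inv (R : trace_rel) : trace_rel := fun y x => R x y.
Definition trel_comp (R1 R2 : trace_rel) : trace_rel :=
  fun x z => exists y, R1 x y /\ R2 y z.

End Traces.

(* Main.v *)
Require Import Defs.
From mathcomp Require Import all_boot.
Set Implicit Arguments. Unset Strict Implicit. Unset Printing Implicit Defensive.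

Definition code (A : Type) (a b : A) (i : nat) : seq A := nseq i a ++ [:: b].

Lemma code_inj (A : eqType) (a b : A) i j X Y : a != b ->
  code a b i ++ X = code a b j ++ Y -> i = j /\ X = Y.
Proof.
move=> Hab; elim: i j => [|i IH] [|j]; rewrite /code /=.
- by case=> ->.
- by case=> Eba _; rewrite Eba eqxx in Hab.
- by case=> Eab _; rewrite Eab eqxx in Hab.
- by case=> /IH [-> ->].
Qed.

Lemma code_neq0 (A : Type) (a b : A) i X : code a b i ++ X <> [::].
Proof. by case: i. Qed.

Definition abP (A : eqType) (a b : A) (w : seq A) := all (fun x => (x == a) || (x == b)) w.

Lemma rigid (A : finType) (D : rel A) (a b : A) (Drefl : reflexive D) (Dsym : symmetric D)
  (Dab : D a b) u v : trace_eq D u v -> abP a b u || abP a b v -> u = v.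
Proof.
have HD : forall x y, (x == a) || (x == b) -> (y == a) || (y == b) -> D x y.
  move=> x y /orP[] /eqP -> /orP[] /eqP ->; by rewrite ?Drefl // Dsym.
elim=> {u v} //.
- move=> u v x y Hxy; rewrite /abP !all_cat /= => H; exfalso.
  case/orP: H => /andP [_ /and3P [Hx Hy _]]; move: Hxy.
    by rewrite HD.
  by rewrite Dsym HD.
- by move=> u v _ IH; rewrite orbC => /IH ->.
- move=> u v w _ IH1 _ IH2 /orP [Hu|Hw].
    have E := IH1 (introT orP (or_introl Hu)); subst v.
    exact: IH2 (introT orP (or_introl Hu)).
  have E := IH2 (introT orP (or_intror Hw)); subst w.
  exact: IH1 (introT orP (or_intror Hw)).
Qed.

Lemma cls_eq (A : finType) (D : rel A) u v : cls D u = cls D v -> trace_eq D u v.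
Proof.
move=> E; have := f_equal (fun t : trace D => proj1_sig t v) E => /= ->.
exact: te_refl.
Qed.

Section Tk.
Definition fk (A : finType) (a b : A) (T : transducer A) (k : bool)
  (t : tr_state T * seq A * seq A * tr_state T) :=
  (t.1.1.1, code a b (index t (tr_trans T)), if k then t.1.1.2 else t.1.2, t.2).

Definition tk (A : finType) (a b : A) (T : transducer A) (k : bool) : transducer A :=
  @Transducer A (tr_state T) (@tr_init A T) (@tr_final A T) (map (@fk A a b T k) (tr_trans T)).
End Tk.

Lemma mem_tk (A : finType) (a b : A) (T : transducer A) k q ci w q' :
  (q, ci, w, q') \in tr_trans (tk a b T k) -> exists2 t, t \in tr_trans T &
   [/\ q = t.1.1.1, ci = code a b (index t (tr_trans T)), w = (if k then t.1.1.2 else t.1.2) & q' = t.2].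
Proof. by case/mapP=> t Ht [-> -> -> ->]; exists t. Qed.

Lemma run_ab (A : finType) (a b : A) (T : transducer A) k q r c x :
  @tr_run A (tk a b T k) q r c x -> abP a b c.
Proof.
elim=> // q0 q0' r0 u1 v1 u0 v0 /mem_tk [t _ [_ -> _ _]] _ IH.
move: IH; rewrite /abP all_cat => ->.
by rewrite andbT /code all_cat all_nseq /= !eqxx !orbT.
Qed.

Lemma run_nil_tk (A : finType) (a b : A) (T : transducer A) k q r c x :
  @tr_run A (tk a b T k) q r c x -> c = [::] -> q = r /\ x = [::].
Proof.
case=> [q0 | q0 q0' r0 u1 v1 u0 v0 Ht _] Ec; first by [].
have [t _ [_ E _ _]] := mem_tk Ht.
rewrite E in Ec; by case: (code_neq0 Ec).
Qed.

Lemma run_to_tk (A : finType) (a b : A) (T : transducer A) q r u v :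
  @tr_run A T q r u v -> exists c, @tr_run A (tk a b T true) q r c u /\ @tr_run A (tk a b T false) q r c v.
Proof.
elim=> [p|p p' s w1 w2 w3 w4 Ht _ [c [H1 H2]]].
  by exists [::]; split; apply: run_nil.
exists (code a b (index (p, w1, w2, p') (tr_trans T)) ++ c); split.
  apply: (@run_cons _ (tk a b T true) p p' s); last exact: H1.
  by apply/mapP; exists (p, w1, w2, p').
apply: (@run_cons _ (tk a b T false) p p' s); last exact: H2.
by apply/mapP; exists (p, w1, w2, p').
Qed.

Lemma main_pair (A : finType) (a b : A) (T : transducer A) (Hab : a != b) c q1 r1 x :
  @tr_run A (tk a b T true) q1 r1 c x -> forall q2 r2 z, @tr_run A (tk a b T false) q2 r2 c z ->
  (c = [::] /\ q1 = r1 /\ q2 = r2 /\ x = [::] /\ z = [::]) \/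
  (q1 = q2 /\ r1 = r2 /\ @tr_run A T q1 r1 x z).
Proof.
elim=> [p|p p' s u1 v1 u v Ht Hr IH] q2 r2 z H2.
  by have [-> ->] := run_nil_tk H2 erefl; left.
right; have [t Ht' [Eq Eu1 Ev1 Eq']] := mem_tk Ht.
move: H2; move Ec: (u1 ++ u) => c' H2.
case: H2 Ec => [p0 | p0 p0' s0 u10 v10 u0 v0 Ht0 Hr0] Ec.
  rewrite Eu1 in Ec; by case: (code_neq0 Ec).
have [t0 Ht0' [Eq0 Eu0 Ev0 Eq0']] := mem_tk Ht0.
rewrite Eu1 Eu0 in Ec; have [Ei Eu] := code_inj Hab Ec.
have Et : t0 = t.
  by rewrite -(nth_index t Ht') -(nth_index t Ht0') Ei.
subst t0 u0.
have HtT : (p, v1, v10, p') \in tr_trans T.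
  rewrite Eq Ev1 Ev0 Eq' /=; clear -Ht'; move: Ht'; by case: t => [[[? ?] ?] ?].
have Hpp : p = p0 by rewrite Eq Eq0.
have Hp' : p' = p0' by rewrite Eq' Eq0'.
subst p0 p0'.
case: (IH _ _ _ Hr0) => [[Eu [Eqr [Eqr0 [Ex Ez]]]] | [_ [Err Hrr]]].
  subst v v0 s; split; first by rewrite Hpp.
  split; first by rewrite Hp' Eqr0.
  apply: run_cons HtT _; exact: run_nil.
split; first by rewrite Hpp.
split; first by [].
exact: run_cons HtT Hrr.
Qed.

Theorem proposition4p11 (A : finType) (D : rel A)
  (Drefl : reflexive D) (Dsym : symmetric D)
  (Hab : exists a b : A, a != b /\ D a b)
  (R : trace_rel D) (HR : rational_trel R) :
  exists R1 R2 : trace_rel D,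
    [/\ lc_rational_trel R1, lc_rational_trel R2 &
        same_trel R (trel_comp (trel_inv R1) R2)].
Proof.
case: Hab => a [b [Hne Dab]].
case: HR => W [[T HT] HRW].
have lcW : forall k, left_closed D (tr_accepts (tk a b T k)).
  move=> k u u' v' Huu [q [r [Hq Hr Hrun]]].
  have E := rigid Drefl Dsym Dab Huu (introT orP (or_intror (run_ab Hrun))).
  subst u'; exists v'; split; last exact: te_refl.
  by exists q, r.
exists (@Defs.lift A D (tr_accepts (tk a b T true))), (@Defs.lift A D (tr_accepts (tk a b T false))).
split.
- exists (tr_accepts (tk a b T true)); split; first by exists (tk a b T true).
  by split => //.
- exists (tr_accepts (tk a b T false)); split; first by exists (tk a b T false).
  by split => //.
move=> x z; apply: (iff_trans (HRW x z)); split.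
  case=> u [v [/HT [q [r [Hq Hr Hrun]]] [-> ->]]].
  have [c [H1 H2]] := run_to_tk a b Hrun.
  exists (cls D c); split.
    by exists c, u; split => //; exists q, r.
  by exists c, v; split => //; exists q, r.
case=> y [[c1 [x' [[q1 [r1 [Hq1 Hr1 H1]]] [Ey Ex]]]] [c2 [z' [[q2 [r2 [Hq2 Hr2 H2]]] [Ey' Ez]]]]].
have Ec : c1 = c2.
  apply: (rigid Drefl Dsym Dab (cls_eq (etrans (esym Ey) Ey'))).
  by rewrite (run_ab H1).
subst c2.
exists x', z'; split => //; apply/HT.
case: (main_pair Hne H1 H2) => [[_ [Eqr [_ [-> ->]]]] | [Eqq [Err Hrun]]].
  by exists q1, q1; split => //; [rewrite Eqr | apply: run_nil].
by exists q1, r1.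
Qed.
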